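(* Let $M$ be a matroid on a finite set $E$, with dual $M^*$, and let $\mathcal{C}$ be a family of subsets of $E$. Then $\mathcal{C}$ is a modular cyclic family in $M$ if and only if $\{E\setminus C: C\in\mathcal{C}\}$ is a modular cut in $M^*$.
   Context: A set $X\subseteq E$ is cyclic in $M$ if it is a union of circuits; $\emptyset$ counts as cyclic. A pair $X,Y$ is modular in $M$ if $r(X)+r(Y)=r(X\cap Y)+r(X\cup Y)$. The cyclic sets form a lattice with join $C_1\cup C_2$ and meet $\mathrm{cyc}(C_1\cap C_2)$. Here $\mathrm{cyc}(X)$ is the largest cyclic subset of $X$, obtained by removing the coloops of $M|_X$. A modular cyclic family is a family of cyclic sets that is down-closed in this lattice and contains $X\cup Y$ for every modular pair $X,Y$ of its members. A modular cut of a matroid is a family of flats that is up-closed in the lattice of flats and contains $X\cap Y$ for every modular pair $X,Y$ of its members. *)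

(* Defs.v *)
From mathcomp Require Import all_boot.
Set Implicit Arguments. Unset Strict Implicit. Unset Printing Implicit Defensive.

(* A matroid on the finite ground set E = [set: T], given by its rank function. *)
Definition matroid_rank (T : finType) (r : {set T} -> nat) : Prop :=
  [/\ (forall X : {set T}, r X <= #|X|),
      (forall X Y : {set T}, X \subset Y -> r X <= r Y) &
      (forall X Y : {set T}, r (X :|: Y) + r (X :&: Y) <= r X + r Y)].

Section Matroid.
Variables (T : finType) (r : {set T} -> nat).

Definition dual_rank (X : {set T}) : nat := #|X| + r (~: X) - r setT.

Definition indep (X : {set T}) : bool := r X == #|X|.

Definition circuit (C : {set T}) : Prop :=
  ~~ indep C /\ forall D : {set T}, D \proper C -> indep D.

Definition cyclic (X : {set T}) : Prop :=
  exists Cs : {set {set T}},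
    (forall C, C \in Cs -> circuit C) /\ X = \bigcup_(C in Cs) C.

Definition closure (X : {set T}) : {set T} := [set e | r (e |: X) == r X].

Definition flat (X : {set T}) : Prop := closure X = X.

Definition modular_pair (X Y : {set T}) : Prop :=
  r X + r Y = r (X :&: Y) + r (X :|: Y).

Definition modular_cyclic_family (F : {set {set T}}) : Prop :=
  [/\ (forall X, X \in F -> cyclic X),
      (forall X Y, X \in F -> cyclic Y -> Y \subset X -> Y \in F) &
      (forall X Y, X \in F -> Y \in F -> modular_pair X Y -> X :|: Y \in F)].

Definition modular_cut (F : {set {set T}}) : Prop :=
  [/\ (forall X, X \in F -> flat X),
      (forall X Y, X \in F -> flat Y -> X \subset Y -> Y \in F) &
      (forall X Y, X \in F -> Y \in F -> modular_pair X Y -> X :&: Y \in F)].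

End Matroid.

(* Main.v *)
Require Import Defs.
From mathcomp Require Import all_boot.
From mathcomp Require Import zify.

Set Implicit Arguments. Unset Strict Implicit. Unset Printing Implicit Defensive.

Section Proofs.
Variables (T : finType) (r : {set T} -> nat).
Hypothesis hr : matroid_rank r.
Implicit Types (X Y S C D Z : {set T}) (e f : T).

Lemma rle X : r X <= #|X|. Proof. by case: hr. Qed.
Lemma rmono X Y : X \subset Y -> r X <= r Y. Proof. by case: hr => _ H _; apply: H. Qed.
Lemma rsub X Y : r (X :|: Y) + r (X :&: Y) <= r X + r Y. Proof. by case: hr. Qed.
Lemma r0 : r set0 = 0. Proof. by have := rle set0; rewrite cards0; lia. Qed.

Lemma runit e X : r (e |: X) <= r X + 1.
Proof.
have := rsub [set e] X; have := rle [set e]; rewrite cards1.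
have := rle ([set e] :&: X); lia.
Qed.

Lemma rD1 e X : e \in X -> r X <= r (X :\ e) + 1.
Proof. by move=> eX; have := runit e (X :\ e); rewrite setD1K. Qed.

Lemma rD1m e X : r (X :\ e) <= r X.
Proof. by apply: rmono; apply: subsetDl. Qed.

Lemma indep_sub X Y : Y \subset X -> r X = #|X| -> r Y = #|Y|.
Proof.
move=> YX rX.
have := rsub Y (X :\: Y).
have -> : Y :|: (X :\: Y) = X.
  by apply/setP => x; rewrite !inE; case: (boolP (x \in Y)) => // xY; rewrite (subsetP YX).
have -> : Y :&: (X :\: Y) = set0.
  by apply/setP => x; rewrite !inE; case: (x \in Y); rewrite ?andbF.
rewrite r0.
have := cardsID Y X; have -> : X :&: Y = Y by apply/setIidPr.
have := rle Y; have := rle (X :\: Y); lia.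
Qed.

Lemma coloop_indep n S : #|S| <= n ->
  (forall f, f \in S -> r S = r (S :\ f) + 1) -> r S = #|S|.
Proof.
elim: n S => [|n IH] S.
  by rewrite leqn0 => /eqP/cards0_eq -> _; rewrite r0 cards0.
move=> cS H.
case: (set_0Vmem S) => [-> | [f fS]]; first by rewrite r0 cards0.
have HS' : forall g, g \in S :\ f -> r (S :\ f) = r (S :\ f :\ g) + 1.
  move=> g; rewrite !inE => /andP [gf gS].
  have := rsub (S :\ g) (S :\ f).
  have -> : S :\ g :|: S :\ f = S.
    apply/setP => x; rewrite !inE.
    case: (eqVneq x g) => [->|]; first by rewrite gf gS.
    by case: (x \in S); rewrite ?andbF ?orbT.
  have -> : (S :\ g) :&: (S :\ f) = S :\ f :\ g.
    by apply/setP => x; rewrite !inE; case: (x == g); case: (x == f); case: (x \in S).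
  have := H g gS; have := rD1 gS.
  have gS' : g \in S :\ f by rewrite !inE gf gS.
  have := rD1 gS'.
  lia.
have IHf : r (S :\ f) = #|S :\ f|.
  by apply: IH => //; move: cS; rewrite (cardsD1 f S) fS; lia.
by rewrite (H f fS) IHf [in RHS](cardsD1 f S) fS; lia.
Qed.

Definition circuitb (C : {set T}) : bool :=
  ~~ indep r C && [forall D : {set T}, (D \proper C) ==> indep r D].

Lemma circuitP C : reflect (circuit r C) (circuitb C).
Proof.
apply: (iffP andP) => [[H1 /forallP H2]|[H1 H2]]; split => //.
  by move=> D /(implyP (H2 D)).
by apply/forallP => D; apply/implyP => /H2.
Qed.

Lemma circuit_drop C e : circuit r C -> e \in C -> r (C :\ e) = r C.
Proof.
move=> [H1 H2] eC.
have /eqP i1 : indep r (C :\ e) by apply: H2; apply: properD1.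
move: H1; rewrite /indep => /eqP H1.
have := rle C; have := rD1m e C; have := cardsD1 e C; rewrite eC /=.
lia.
Qed.

Lemma cyclic_noloop Y : cyclic r Y -> forall e, e \in Y -> r (Y :\ e) = r Y.
Proof.
move=> [Cs [HC HY]] e eY.
have [C CCs eC] : exists2 C, C \in Cs & e \in C by apply/bigcupP; rewrite -HY.
have CY : C \subset Y by rewrite HY; apply: (bigcup_sup C CCs).
have := rsub (Y :\ e) C.
have -> : Y :\ e :|: C = Y.
  apply/setP => x; rewrite !inE.
  case: (eqVneq x e) => [->|] /=; first by rewrite eY eC ?orbT ?andbF.
  by case: (boolP (x \in C)) => [/(subsetP CY) -> |]; rewrite ?orbT ?orbF.
have -> : (Y :\ e) :&: C = C :\ e.
  apply/setP => x; rewrite !inE.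
  by case: (boolP (x \in C)) => [/(subsetP CY) -> |]; rewrite ?andbT ?andbF.
rewrite (circuit_drop (HC C CCs) eC).
have := rD1m e Y; lia.
Qed.

Lemma circ_exists n e S : #|S| <= n -> e \notin S -> r (e |: S) = r S ->
  exists C, [/\ circuit r C, e \in C & C \subset e |: S].
Proof.
elim: n S => [|n IH] S.
  rewrite leqn0 => /eqP/cards0_eq -> _.
  rewrite setU0 r0 => H; have := rle [set e]; rewrite cards1.
  (* r [set e] = 0 : {e} is a circuit *)
  exists [set e]; split; [ | by rewrite set11 | by [] ].
  split; first by rewrite /indep H cards1.
  move=> D /properP [DS [x]]; rewrite inE => /eqP -> xD.
  have -> : D = set0.
    apply/setP => y; rewrite inE; apply/negbTE/negP => yD.
    by move: (subsetP DS y yD); rewrite inE => /eqP Hy; move: xD; rewrite -Hy yD.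
  by rewrite /indep r0 cards0.
move=> cS eS H.
case: (pickP [pred f | (f \in S) && (r (e |: (S :\ f)) == r (S :\ f))]) => [f /andP [fS /eqP Hf] | Hno].
  have [|||C [C1 C2 C3]] := IH (S :\ f).
  - by move: cS; rewrite (cardsD1 f S) fS.
  - by rewrite inE negb_and eS orbT.
  - by [].
  exists C; split => //; apply: (subset_trans C3).
  by apply: setUS; apply: subsetDl.
have Hf : forall f, f \in S -> r (e |: (S :\ f)) = r (S :\ f) + 1.
  move=> f fS; have := Hno f; rewrite /= fS /= => /eqP Hn.
  have := runit e (S :\ f); have := rmono (subsetUr [set e] (S :\ f)); lia.
have HS : forall f, f \in S -> r S = r (S :\ f) + 1.
  move=> f fS; have := rD1 fS; have := rD1m f S; have := Hf f fS.
  have : r (e |: (S :\ f)) <= r (e |: S) by apply: rmono; apply: setUS; apply: subsetDl.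
  lia.
have iS : r S = #|S| := coloop_indep (leqnn _) HS.
exists (e |: S); split; [ | by rewrite setU11 | by [] ].
  split.
    by rewrite /indep H iS cardsU1 eS /=; apply/eqP; lia.
  move=> D /properP [DS [x xS xD]].
  case: (boolP (e \in D)) => eD; last first.
    apply/eqP; apply: (indep_sub _ iS).
    apply/subsetP => y yD; have := subsetP DS y yD; rewrite !inE.
    case/orP => [/eqP Hy|//]; by move: eD; rewrite -Hy yD.
  have xe : x != e by apply/eqP => Hx; move: xD; rewrite Hx eD.
  have xS' : x \in S by move: xS; rewrite !inE (negbTE xe).
  apply/eqP; apply: (indep_sub (X := e |: (S :\ x))).
    apply/subsetP => y yD; rewrite !inE.
    case: (eqVneq y e) => //= ye.
    have := subsetP DS y yD; rewrite !inE (negbTE ye) /= => ->.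
    by rewrite andbT; apply/eqP => Hy; move: xD; rewrite -Hy yD.
  have eS' : e \notin S :\ x by rewrite !inE negb_and eS orbT.
  rewrite (Hf x xS') cardsU1 eS' /=.
  have := HS x xS'; rewrite iS (cardsD1 x S) xS'; lia.
Qed.

Lemma noloop_cyclic Y : (forall e, e \in Y -> r (Y :\ e) = r Y) -> cyclic r Y.
Proof.
move=> H.
exists [set C : {set T} | (C \subset Y) && circuitb C]; split.
  by move=> C; rewrite inE => /andP [_ /circuitP].
apply/eqP; rewrite eqEsubset; apply/andP; split; last first.
  by apply/bigcupsP => C; rewrite inE => /andP [].
apply/subsetP => e eY.
have [|| C [C1 C2 C3]] := circ_exists (n := #|Y :\ e|) (e := e) (S := Y :\ e) (leqnn _).
- by rewrite !inE eq_refl.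
- by rewrite setD1K // H.
apply/bigcupP; exists C => //.
by rewrite inE (setD1K eY) in C3 *; rewrite C3; apply/circuitP.
Qed.

Lemma rT_bound X : r setT <= #|X| + r (~: X).
Proof.
have := rsub X (~: X); rewrite setUCr setICr r0 => H.
have := rle X; lia.
Qed.

Lemma dualC Z : dual_rank r (~: Z) = #|~: Z| + r Z - r setT.
Proof. by rewrite /dual_rank setCK. Qed.

Lemma cyclic_flat Y : cyclic r Y <-> flat (dual_rank r) (~: Y).
Proof.
have key : forall e, e \in Y ->
   (dual_rank r (e |: ~: Y) == dual_rank r (~: Y)) = (r (Y :\ e) + 1 == r Y).
  move=> e eY.
  have E1 : e |: ~: Y = ~: (Y :\ e).
    apply/setP => x; rewrite !inE.
    by case: (eqVneq x e) => [->|]; rewrite ?eY.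
  rewrite E1 !dualC.
  have Ec : #|~: (Y :\ e)| = #|~: Y| + 1.
    by rewrite -E1 cardsU1 !inE eY /=; lia.
  have := rT_bound (~: (Y :\ e)); rewrite setCK Ec => a.
  have := rT_bound (~: Y); rewrite setCK => b.
  apply/eqP/eqP; lia.
split.
  move=> /cyclic_noloop cY; apply/setP => x; rewrite /Defs.closure inE.
  case: (boolP (x \in Y)) => xY.
    rewrite inE xY key //; apply/negbTE; rewrite (cY x xY); apply/eqP; lia.
  by rewrite inE xY /= (setUidPr _) ?eq_refl // sub1set inE.
move=> Hf; apply: noloop_cyclic => e eY.
have : e \notin Defs.closure (dual_rank r) (~: Y) by rewrite Hf inE eY.
rewrite inE key // => /eqP Hn.
have := rD1 eY; have := rD1m e Y; lia.
Qed.

Lemma flat_cyclic Z : flat (dual_rank r) Z <-> cyclic r (~: Z).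
Proof. by rewrite cyclic_flat setCK. Qed.

Lemma modular_dual X Y :
  modular_pair (dual_rank r) (~: X) (~: Y) <-> modular_pair r X Y.
Proof.
rewrite /modular_pair -setCU -setCI !dualC.
have c := cardsUI (~: X) (~: Y); rewrite -setCU -setCI in c.
have a1 := rT_bound (~: X); have a2 := rT_bound (~: Y).
have a3 := rT_bound (~: (X :|: Y)); have a4 := rT_bound (~: (X :&: Y)).
rewrite !setCK in a1 a2 a3 a4.
split => H; lia.
Qed.

End Proofs.

Theorem proposition2p1 (T : finType) (r : {set T} -> nat) (F : {set {set T}}) :
  matroid_rank r ->
  (modular_cyclic_family r F <->
   modular_cut (dual_rank r) [set ~: C | C in F]).
Proof.
move=> hr.
have memF : forall Z, (Z \in [set ~: C | C in F]) = (~: Z \in F).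
  by move=> Z; rewrite -{1}[Z]setCK mem_imset //; apply: setC_inj.
split.
  move=> [H1 H2 H3]; split.
  - move=> X; rewrite memF => /H1; by rewrite (flat_cyclic hr).
  - move=> X Y; rewrite !memF => XF /(flat_cyclic hr) cY XY.
    by apply: (H2 _ _ XF cY); rewrite setCS.
  - move=> X Y; rewrite !memF => XF YF.
    rewrite -[X]setCK -[Y]setCK (modular_dual hr) => M.
    by rewrite !setCK setCI; apply: H3.
move=> [H1 H2 H3]; split.
- move=> X XF; apply/(cyclic_flat hr); apply: H1; by rewrite memF setCK.
- move=> X Y XF cY YX.
  have := H2 (~: X) (~: Y); rewrite !memF !setCK setCS => /(_ XF); apply => //.
  by apply/(cyclic_flat hr).
- move=> X Y XF YF M.
  have := H3 (~: X) (~: Y); rewrite !memF !setCK (modular_dual hr) -setCU setCK.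
  by apply.
Qed.
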